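(* Let $R$ be a ring and $N$ a right $R$-module with a filtration $(N_\alpha \mid \alpha \leq \tau)$ (for some ordinal $\tau$). Let $M$ be a finitely generated right $R$-module such that for each $\alpha < \tau$, each submodule $K$ with $N_\alpha \subseteq K \subseteq N_{\alpha+1}$, and each $f \in \mathrm{Hom}_R(M, N_{\alpha+1}/K)$, there exists $g \in \mathrm{Hom}_R(M, N_{\alpha+1})$ with $f = \pi_K g$, where $\pi_K : N_{\alpha+1} \to N_{\alpha+1}/K$ is the canonical projection. Then $M$ is $N$-projective.
   Context: A chain $(N_\alpha \mid \alpha \leq \tau)$ of submodules of $N$ is a filtration of $N$ if $\tau$ is an ordinal, $N_0 = 0$, $N_\alpha \subseteq N_{\alpha+1}$ for each $\alpha < \tau$, $N_\alpha = \bigcup_{\beta<\alpha} N_\beta$ for each limit ordinal $\alpha \leq \tau$, and $N_\tau = N$. A module $M$ is $N$-projective if for every submodule $P \subseteq N$, every homomorphism $M \to N/P$ factors through the canonical projection $N \to N/P$. *)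

(* Defs.v *)
(* Right R-modules are modelled as left modules over the
   converse ring R^c (scalar action  r *: m  stands for  m r). *)
From HB Require Import structures.
From mathcomp Require Import all_boot all_order all_algebra.
Set Implicit Arguments. Unset Strict Implicit. Unset Printing Implicit Defensive.
Import Order.TTheory GRing.Theory Num.Theory.
Local Open Scope ring_scope.

Section Defs.
Variable R : pzRingType.

Definition is_submodule (N : lmodType R^c) (P : N -> Prop) : Prop :=
  P 0 /\ (forall (a : R^c) (x y : N), P x -> P y -> P (a *: x + y)).

Definition fin_gen (M : lmodType R^c) : Prop :=
  exists s : seq M, forall m : M,
    exists c : 'I_(size s) -> R^c, m = \sum_(i < size s) c i *: s`_i.

(* [pi] realises the canonical projection  A -> A/K  onto Q, where A, K are
   submodules of N with K contained in A: pi is R-linear on A, maps A onto Q,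
   and its kernel on A is exactly K.  (Q is thus A/K up to the unique
   isomorphism compatible with the projection.) *)
Definition is_quotient_proj (N Q : lmodType R^c) (A K : N -> Prop)
    (pi : N -> Q) : Prop :=
  [/\ forall (a : R^c) (x y : N), A x -> A y -> pi (a *: x + y) = a *: pi x + pi y,
      (forall q : Q, exists2 x, A x & pi x = q)
    & forall x, A x -> (pi x = 0 <-> K x)].

Definition rel_projective (M N : lmodType R^c) : Prop :=
  forall (P : N -> Prop), is_submodule P ->
  forall (Q : lmodType R^c) (pi : N -> Q),
    is_quotient_proj (fun _ => True) P pi ->
  forall f : {linear M -> Q},
    exists g : {linear M -> N}, forall m, pi (g m) = f m.

(* Ordinals <= tau are modelled by a well-ordered type I with greatest
   element tau. *)
Definition well_ordered (d : Order.disp_t) (I : orderType d) : Prop :=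
  well_founded (fun a b : I => (a < b)%O).

Definition is_succ (d : Order.disp_t) (I : orderType d) (a b : I) : Prop :=
  (a < b)%O /\ ~ (exists c : I, (a < c)%O /\ (c < b)%O).

Definition is_least (d : Order.disp_t) (I : orderType d) (a : I) : Prop :=
  forall b : I, (a <= b)%O.

Definition is_limit (d : Order.disp_t) (I : orderType d) (a : I) : Prop :=
  ~ is_least a /\ ~ (exists b : I, is_succ b a).

Definition is_filtration (d : Order.disp_t) (I : orderType d) (tau : I)
    (N : lmodType R^c) (Nf : I -> N -> Prop) : Prop :=
  (forall a, is_submodule (Nf a)) /\
  [/\ forall a b : I, (a <= b)%O -> forall x, Nf a x -> Nf b x,
      forall a, is_least a -> forall x, (Nf a x <-> x = 0),
      forall a b, is_succ a b -> forall x, Nf a x -> Nf b x,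
      forall a, is_limit a -> forall x, (Nf a x <-> exists2 b, (b < a)%O & Nf b x)
    & forall x, Nf tau x].

End Defs.

(* Main.v *)
Require Import Defs.
From HB Require Import structures.
From mathcomp Require Import all_boot all_order all_algebra.
From mathcomp Require Import boolp.
Set Implicit Arguments. Unset Strict Implicit. Unset Printing Implicit Defensive.
Import Order.TTheory GRing.Theory Num.Theory.
Local Open Scope ring_scope.
Local Open Scope quotient_scope.

Section SubmodFacts.
Variables (R : pzRingType) (N : lmodType R^c) (A : N -> Prop) (hA : is_submodule A).
Lemma sm0 : A 0. Proof. by case: hA. Qed.
Lemma smD x y : A x -> A y -> A (x + y).
Proof. by case: hA => _ h ax ay; have := h 1 x y ax ay; rewrite scale1r. Qed.
Lemma smZ (a : R^c) x : A x -> A (a *: x).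
Proof. by case: hA => h0 h ax; have := h a x 0 ax h0; rewrite addr0. Qed.
Lemma smN x : A x -> A (- x).
Proof. by move=> ax; rewrite -scaleN1r; apply: smZ. Qed.
Lemma smB x y : A x -> A y -> A (x - y).
Proof. by move=> ax ay; apply: smD => //; apply: smN. Qed.
End SubmodFacts.

Section QuotMod.
Variables (R : pzRingType) (N : lmodType R^c) (A K : N -> Prop).
Hypotheses (hA : is_submodule A) (hK : is_submodule K).

Definition Tsub := {x : N | `[< A x >]}.
Definition eT (u v : Tsub) : bool := `[< K (val u - val v) >].
Lemma eT_refl : reflexive eT.
Proof. by move=> u; apply/asboolP; rewrite subrr; apply: sm0. Qed.
Lemma eT_sym : symmetric eT.
Proof.
move=> u v; apply/asboolP/asboolP => h; rewrite -opprB; exact: smN.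
Qed.
Lemma eT_trans : transitive eT.
Proof.
move=> v u w /asboolP h1 /asboolP h2; apply/asboolP.
by have := smD hK h1 h2; rewrite addrA subrK.
Qed.
Definition eTrel := EquivRel eT eT_refl eT_sym eT_trans.
Definition Qt := {eq_quot eTrel}.
HB.instance Definition _ := Choice.on Qt.
HB.instance Definition _ := EqQuotient.on Qt.

Definition T0 : Tsub := exist _ 0 (introT (asboolP _) (sm0 hA)).
Definition addT (u v : Tsub) : Tsub :=
  exist _ (val u + val v) (introT (asboolP _) (smD hA (elimT (asboolP _) (valP u)) (elimT (asboolP _) (valP v)))).
Definition oppT (u : Tsub) : Tsub :=
  exist _ (- val u) (introT (asboolP _) (smN hA (elimT (asboolP _) (valP u)))).
Definition scaleT (a : R^c) (u : Tsub) : Tsub :=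
  exist _ (a *: val u) (introT (asboolP _) (smZ hA a (elimT (asboolP _) (valP u)))).

Lemma reprE (u : Tsub) : K (val (repr (\pi_Qt u)) - val u).
Proof. by apply/asboolP; apply/(@eqmodP _ eTrel); rewrite reprK. Qed.

Definition zeroQ : Qt := \pi T0.
Definition addQ (a b : Qt) : Qt := \pi_Qt (addT (repr a) (repr b)).
Definition oppQ (a : Qt) : Qt := \pi_Qt (oppT (repr a)).
Definition scaleQ (r : R^c) (a : Qt) : Qt := \pi_Qt (scaleT r (repr a)).

Lemma addQpi u v : addQ (\pi u) (\pi v) = \pi_Qt (addT u v).
Proof.
apply/(@eqmodP _ eTrel); apply/asboolP => /=.
have := smD hK (reprE u) (reprE v).
by congr K; rewrite opprD !addrA; congr (_ + _); rewrite -!addrA; congr (_ + _); rewrite addrC.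
Qed.
Lemma oppQpi u : oppQ (\pi u) = \pi_Qt (oppT u).
Proof.
apply/(@eqmodP _ eTrel); apply/asboolP => /=.
by have := smN hK (reprE u); rewrite opprB addrC opprK.
Qed.
Lemma scaleQpi r u : scaleQ r (\pi u) = \pi_Qt (scaleT r u).
Proof.
apply/(@eqmodP _ eTrel); apply/asboolP => /=.
by have := smZ hK r (reprE u); rewrite scalerBr.
Qed.

Lemma addQA : associative addQ.
Proof.
elim/quotW=> a; elim/quotW=> b; elim/quotW=> c; rewrite !addQpi.
by congr (\pi_Qt _); apply: val_inj; rewrite /= addrA.
Qed.
Lemma addQC : commutative addQ.
Proof.
elim/quotW=> a; elim/quotW=> b; rewrite !addQpi.
by congr (\pi_Qt _); apply: val_inj; rewrite /= addrC.
Qed.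
Lemma add0Q : left_id zeroQ addQ.
Proof.
elim/quotW=> a; rewrite /zeroQ addQpi.
by congr (\pi_Qt _); apply: val_inj; rewrite /= add0r.
Qed.
Lemma addNQ : left_inverse zeroQ oppQ addQ.
Proof.
elim/quotW=> a; rewrite oppQpi addQpi.
by congr (\pi_Qt _); apply: val_inj; rewrite /= addNr.
Qed.
HB.instance Definition _ := GRing.isZmodule.Build Qt addQA addQC add0Q addNQ.

Lemma scaleQA a b v : scaleQ a (scaleQ b v) = scaleQ (a * b) v.
Proof.
elim/quotW: v => v; rewrite !scaleQpi.
by congr (\pi_Qt _); apply: val_inj; rewrite /= scalerA.
Qed.
Lemma scale1Q : left_id 1 scaleQ.
Proof.
elim/quotW=> v; rewrite !scaleQpi.
by congr (\pi_Qt _); apply: val_inj; rewrite /= scale1r.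
Qed.
Lemma scaleQDr : right_distributive scaleQ +%R.
Proof.
move=> a; elim/quotW=> u; elim/quotW=> v.
rewrite /GRing.add /= addQpi !scaleQpi addQpi.
by congr (\pi_Qt _); apply: val_inj; rewrite /= scalerDr.
Qed.
Lemma scaleQDl v : {morph scaleQ^~ v: a b / a + b}.
Proof.
elim/quotW: v => v a b.
rewrite /GRing.add /= !scaleQpi addQpi.
by congr (\pi_Qt _); apply: val_inj; rewrite /= scalerDl.
Qed.
HB.instance Definition _ := GRing.Zmodule_isLmodule.Build R^c Qt scaleQA scale1Q scaleQDr scaleQDl.

Hypothesis KA : forall x, K x -> A x.

Definition piN (x : N) : Qt := if insub x is Some u then \pi_Qt u else 0.

Lemma piNE x (ax : A x) : piN x = \pi_Qt (exist _ x (introT (asboolP _) ax)).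
Proof.
rewrite /piN; case: insubP => [u _ hu|]; last by move/negP; case; apply/asboolP.
by congr (\pi_Qt _); apply: val_inj.
Qed.


Lemma piN_proj : is_quotient_proj A K piN.
Proof.
split.
- move=> a x y ax ay.
  rewrite (piNE (smD hA (smZ hA a ax) ay)) (piNE ax) (piNE ay).
  rewrite /GRing.scale /= scaleQpi /GRing.add /= addQpi.
  by congr (\pi_Qt _); apply: val_inj.
- elim/quotW=> u; exists (val u); first exact: (elimT (asboolP _) (valP u)).
  rewrite (piNE (elimT (asboolP _) (valP u))).
  by congr (\pi_Qt _); apply: val_inj.
- move=> x ax; rewrite (piNE ax); split.
  + move=> /(@eqmodP _ eTrel _ T0) /asboolP /=; by rewrite subr0.
  + move=> kx; apply/(@eqmodP _ eTrel _ T0); apply/asboolP => /=; by rewrite subr0.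
Qed.
End QuotMod.

Lemma quotient_exists (R : pzRingType) (N : lmodType R^c) (A K : N -> Prop) :
  is_submodule A -> is_submodule K -> (forall x, K x -> A x) ->
  exists (Q : lmodType R^c) (pi : N -> Q), is_quotient_proj A K pi.
Proof. move=> hA hK KA; have := (@piN_proj R N A K hA hK) => H. eexists; eexists; exact: H. Qed.

Lemma mk_linear (R : pzRingType) (M V : lmodType R^c) (h : M -> V) :
  (forall (a : R^c) x y, h (a *: x + y) = a *: h x + h y) ->
  exists g : {linear M -> V}, forall m, g m = h m.
Proof.
move=> H.
exists (HB.pack_for {linear M -> V} h (GRing.isLinear.Build R^c M V *:%R h (fun a x y => H a x y))).
by [].
Qed.
From Stdlib Require Import Classical ClassicalEpsilon.
Unset Implicit Arguments. Set Strict Implicit.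
Local Close Scope quotient_scope.
Theorem lemma1p5 (R : pzRingType) (d : Order.disp_t) (I : orderType d)
    (tau : I) (N M : lmodType R^c) (Nf : I -> N -> Prop) :
  well_ordered I ->
  (forall a : I, (a <= tau)%O) ->
  is_filtration tau Nf ->
  fin_gen M ->
  (forall a a1 : I, (a < tau)%O -> is_succ a a1 ->
   forall K : N -> Prop, is_submodule K ->
     (forall x, Nf a x -> K x) -> (forall x, K x -> Nf a1 x) ->
   forall (Q : lmodType R^c) (pi : N -> Q), is_quotient_proj (Nf a1) K pi ->
   forall f : {linear M -> Q},
     exists g : {linear M -> N}, forall m, Nf a1 (g m) /\ pi (g m) = f m) ->
  rel_projective M N.
Proof.
move=> wf tau_max [Nsub [Nmono Nleast Nsucc Nlim Ntau]] [s hs] Hyp P hP Q pi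
  [pilin pisurj piker] f.
have [pl plE] : exists pl : {linear N -> Q}, forall x, pl x = pi x.
  by apply: mk_linear => a x y; apply: pilin.
have piE x : pi x = pl x by rewrite plE.
have pP p : P p -> pi p = 0 by move=> Pp; apply/(piker p Logic.I).
pose Good (a : I) := exists g : {linear M -> N},
  forall m, exists2 x, Nf a x & pi x = f m - pi (g m).
suff main : forall a, Good a -> exists g : {linear M -> N}, forall m, pi (g m) = f m.
  apply: (main tau).
  have [g0 g0E] : exists g : {linear M -> N}, forall m, g m = 0.
    by apply: mk_linear => a x y; rewrite scaler0 addr0.
  exists g0 => m; have [x _ px] := pisurj (f m); exists x => //.
  by rewrite g0E (pP 0) ?subr0 //; case: hP.
move=> a; elim/(well_founded_ind wf): a => a IH [g Hg].
have [xs Hxs] : exists xs : M -> N, forall m, Nf a (xs m) /\ pi (xs m) = f m - pi (g m).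
  have Hg2 m : exists x, Nf a x /\ pi x = f m - pi (g m).
    by case: (Hg m) => x h1 h2; exists x.
  exists (fun m => proj1_sig (constructive_indefinite_description _ (Hg2 m))).
  move=> m; case: (constructive_indefinite_description _ _) => x /= [h1 h2]; done.
case: (classic (is_least a)) => [la|nla].
  exists g => m; have [h1 h2] := Hxs m.
  move/(Nleast a la): h1 => x0; move: h2; rewrite x0 pP; last by case: hP.
  by move/eqP; rewrite eq_sym subr_eq0 => /eqP.
case: (classic (exists b, is_succ b a)) => [[b sba]|nsucc]; last first.
  have lima : is_limit a by split.
  have [b0 b0a] : exists b0, (b0 < a)%O.
    apply: NNPP => hn; apply: nla => c; rewrite leNgt; apply/negP => ca.
    by apply: hn; exists c.
  have comb : forall n, exists2 b, (b < a)%O & forall i, (i < n)%N -> Nf b (xs s`_i).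
    elim=> [|n [b ba hb]]; first by exists b0.
    have [c ca hc] := (proj1 (Nlim a lima _) (proj1 (Hxs s`_n))).
    case: (leP b c) => [bc|cb].
      exists c => // i; rewrite ltnS leq_eqVlt => /orP[/eqP->//|lt].
      by apply: (Nmono b c bc); apply: hb.
    exists b => // i; rewrite ltnS leq_eqVlt => /orP[/eqP->|lt]; last exact: hb.
    by apply: (Nmono c b (ltW cb)).
  have [b ba hb] := comb (size s).
  apply: (IH b ba); exists g => m.
  have [c mE] := hs m.
  exists (\sum_(i < size s) c i *: xs s`_i).
    apply: (big_ind (Nf b)); first by case: (Nsub b).
      by move=> x y; apply: smD.
    by move=> i _; apply: smZ => //; apply: hb.
  rewrite piE linear_sum /= mE linear_sum /= piE !linear_sum /= -big_split /=.
  apply: eq_bigr => i _; rewrite !linearZ /= -scalerDr; congr (_ *: _).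
  by rewrite -piE (proj2 (Hxs _)) piE.
have ba : (b < a)%O by case: sba.
have btau : (b < tau)%O by apply: (lt_le_trans ba).
pose K x := exists y, exists2 p, Nf b y /\ (P p /\ Nf a p) & x = y + p.
have Ksub : is_submodule K.
  split.
    exists 0; exists 0; last by rewrite addr0.
    by split; [case: (Nsub b)|split; [case: hP|case: (Nsub a)]].
  move=> r x z [y1 [p1 [h1 [h2 h3]] ->]] [y2 [p2 [h4 [h5 h6]] ->]].
  exists (r *: y1 + y2); exists (r *: p1 + p2).
    split; first by case: (Nsub b) => _; apply.
    by split; [case: hP => _; apply|case: (Nsub a) => _; apply].
  by rewrite scalerDr -!addrA; congr (_ + _); rewrite addrCA.
have NbK : forall x, Nf b x -> K x.
  move=> x hx; exists x; exists 0; last by rewrite addr0.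
  by split=> //; split; [case: hP|case: (Nsub a)].
have KNa : forall x, K x -> Nf a x.
  by move=> x [y [p [h1 [_ h3]] ->]]; apply: smD => //; apply: (Nsucc b a).
have [Q' [pi' [pi'lin pi'surj pi'ker]]] := quotient_exists (Nsub a) Ksub KNa.
have pi'B x y : Nf a x -> Nf a y -> pi' (x - y) = pi' x - pi' y.
  move=> hx hy; have -> : x - y = (-1) *: y + x by rewrite scaleN1r addrC.
  by rewrite pi'lin // scaleN1r addrC.
have Kdiff x y : Nf a x -> Nf a y -> pi x = pi y -> K (x - y).
  move=> hx hy pxy; exists 0; exists (x - y); last by rewrite add0r.
  split; first by case: (Nsub b).
  split; last exact: smB.
  by apply/(piker _ Logic.I); rewrite !piE linearB /= -!piE pxy subrr.
have pi'eq x y : Nf a x -> Nf a y -> pi x = pi y -> pi' x = pi' y.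
  move=> hx hy pxy; apply/eqP; rewrite -subr_eq0 -pi'B //; apply/eqP.
  by apply/(pi'ker _ (smB (Nsub a) hx hy)); apply: Kdiff.
have [hl hlE] : exists hl : {linear M -> Q'}, forall m, hl m = pi' (xs m).
  apply: mk_linear => r x y.
  have [hx1 hx2] := Hxs x; have [hy1 hy2] := Hxs y.
  rewrite -pi'lin //; apply: pi'eq.
  - exact: (proj1 (Hxs _)).
  - by apply: smD => //; apply: smZ.
  rewrite (proj2 (Hxs _)) pilin // hx2 hy2 !linearP /= pilin //.
  by rewrite scalerBr opprD addrACA.
have [g' Hg'] := Hyp b a btau sba K Ksub NbK KNa Q' pi' (And3 pi'lin pi'surj pi'ker) hl.
have [gg ggE] : exists gg : {linear M -> N}, forall m, gg m = g m + g' m.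
  by apply: mk_linear => r x y; rewrite !linearP /= scalerDr addrACA.
apply: (IH b ba); exists gg => m.
have [h1 h2] := Hg' m; rewrite hlE in h2.
have [xm1 xm2] := Hxs m.
have : K (xs m - g' m).
  by apply/(pi'ker _ (smB (Nsub a) xm1 h1)); rewrite pi'B // h2 subrr.
move=> [y [p [hy [Pp _]] e]].
exists y => //.
have -> : y = xs m - g' m - p by rewrite e addrK.
rewrite ggE !piE !linearB linearD /= -!piE xm2 (pP p Pp) subr0 opprD addrA.
by rewrite !piE.
Qed.
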